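(* Let $N=n$ be prime, $f=x_1^N+\dots+x_N^N$, $S\subseteq S_N$, $G=S\ltimes\mathrm{SL}_f$. Let $\sigma=\prod_{a=1}^p\sigma_a\in S$ be a disjoint cycle decomposition (length-1 cycles included) with supports $I_a$, let $\widetilde x_{a}=\sum_{k\in I_a}x_k$, and let $X=\prod_{a=1}^p\lfloor\widetilde x_{a}^{r_a}\rfloor\xi_{\sigma_a}\in\mathcal A'_{f,\sigma}$ with $0\le r_a\le N-2$. For each $a$ let $k_a\in\{1,\dots,N-1\}$ be the unique integer with $r_a+1\equiv k_a|\sigma_a|\pmod N$. If $X$ is nonzero in $\mathcal A_{f,G}$, i.e. $X$ is invariant under $Z_G(\sigma)$, then $k_a=k_b$ for all $1\le a,b\le p$.
   Context: $\zeta=\exp(2\pi\sqrt{-1}/N)$; $t_k$ multiplies $x_k$ by $\zeta$; $G_f^d=\langle t_1,\dots,t_N\rangle$, $\mathrm{SL}_f=\{g\in G_f^d:\det g=1\}$; $S_N$ permutes coordinates. For $u\in S_N\ltimes G_f^d$: $\mathrm{Fix}(u)$ is the eigenvalue-1 subspace, $M_u$ the sum of the other eigenspaces, $\mathcal A'_{f,u}=\mathrm{Jac}(f|_{\mathrm{Fix}(u)})\,\xi_u$ with formal generator $\xi_u$; for a permutation $\sigma=\prod_a\sigma_a$ one writes $\xi_\sigma=\prod_a\xi_{\sigma_a}$ and $\lfloor\prod_a\widetilde x_a^{r_a}\rfloor\xi_\sigma=\prod_a\lfloor\widetilde x_a^{r_a}\rfloor\xi_{\sigma_a}$. For $v\in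 Z_G(u)$, $v^*(\lfloor\phi(\mathbf x)\rfloor\xi_u)=\det(v|_{M_u})^{-1}\lfloor\phi(v\cdot\mathbf x)\rfloor\xi_u$. The phase space is $\mathcal A_{f,G}=\bigoplus_{u\in\mathcal C^G}(\mathcal A'_{f,u})^{Z_G(u)}$, $\mathcal C^G$ a set of conjugacy class representatives. *)

(* Defs.v *)
From HB Require Import structures.
From mathcomp Require Import all_boot all_order all_algebra all_fingroup all_field.
From mathcomp Require Import mpoly.
Set Implicit Arguments. Unset Strict Implicit. Unset Printing Implicit Defensive.
Import Order.TTheory GRing.Theory Num.Theory.
Local Open Scope ring_scope.

Section Defs.
Variable N : nat.

Definition zeta : algC :=
  match N as m return algC with
  | 0 => 1
  | m.+1 => sval (C_prim_root_exists (ltn0Sn m))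
  end.

(* Elements of G_f^d = < t_1, ..., t_N > : diag(zeta^e_1, ..., zeta^e_N). *)
Definition diag_of (e : 'I_N -> nat) : 'M[algC]_N :=
  diag_mx (\row_i (zeta ^+ e i)).

Definition in_SLf (g : 'M[algC]_N) : Prop :=
  (exists e : 'I_N -> nat, g = diag_of e) /\ \det g = 1.

(* G = S |x SL_f, realised as a group of N x N matrices acting on row
   vectors x (x |-> x *m v); the permutation s acts by perm_mx s. *)
Definition in_G (S : {group {perm 'I_N}}) (v : 'M[algC]_N) : Prop :=
  exists s, exists g, [/\ s \in S, in_SLf g & v = perm_mx s *m g].

Definition in_centralizer (S : {group {perm 'I_N}}) (u v : 'M[algC]_N) : Prop :=
  in_G S v /\ v *m u = u *m v.

Definition Fix (u : 'M[algC]_N) : 'M[algC]_N := eigenspace u 1.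

Definition eigs (u : 'M[algC]_N) : seq algC :=
  undup (sval (closed_field_poly_normal (char_poly u))).

Definition Mspace (u : 'M[algC]_N) : 'M[algC]_N :=
  (\sum_(l <- eigs u | l != 1) eigenspace u l)%MS.

Definition det_restr (v W : 'M[algC]_N) : algC :=
  \det (row_base W *m v *m pinvmx (row_base W)).

Definition fermat : {mpoly algC[N]} := \sum_(i < N) 'X_i ^+ N.

Definition dderiv (w : 'rV[algC]_N) (p : {mpoly algC[N]}) : {mpoly algC[N]} :=
  \sum_(i < N) w 0 i *: mderiv i p.

Definition pullback (v : 'M[algC]_N) (p : {mpoly algC[N]}) : {mpoly algC[N]} :=
  p \mPo [tuple \sum_(i < N) v i j *: 'X_i | j < N].

(* Kernel of C[x] -> Jac(f|_{Fix(u)}):  p|_{Fix(u)} lies in the Jacobian ideal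
   of f|_{Fix(u)}, i.e. p = q + sum_k h_k * d_{w_k} f with q vanishing on
   Fix(u) and directions w_k in Fix(u). *)
Definition in_jac_kernel (u : 'M[algC]_N) (p : {mpoly algC[N]}) : Prop :=
  exists (q : {mpoly algC[N]}) (ws : seq ('rV[algC]_N * {mpoly algC[N]})),
    [/\ forall x : 'rV[algC]_N, (x <= Fix u)%MS -> q.@[x 0] = 0,
        all (fun wh => (wh.1 <= Fix u)%MS) ws &
        p = q + \sum_(wh <- ws) wh.2 * dderiv wh.1 fermat].

(* The class of phi * xi_u in A'_{f,u} is fixed by v^*:
   v^*(|_phi_| xi_u) = det(v|M_u)^-1 |_phi(v.x)_| xi_u. *)
Definition invariant_by (u v : 'M[algC]_N) (phi : {mpoly algC[N]}) : Prop :=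
  in_jac_kernel u ((det_restr v (Mspace u))^-1 *: pullback v phi - phi).

Definition Xpoly (s : {perm 'I_N}) (r : {set 'I_N} -> nat) : {mpoly algC[N]} :=
  \prod_(A in porbits s) (\sum_(k in A) 'X_k) ^+ r A.

End Defs.

(* Main.v *)
Require Import Defs.
From HB Require Import structures.
From mathcomp Require Import all_boot all_order all_algebra all_fingroup all_field.
From mathcomp Require Import mpoly.
From mathcomp Require Import zify.
Set Implicit Arguments. Unset Strict Implicit. Unset Printing Implicit Defensive.
Import Order.TTheory GRing.Theory Num.Theory.
Local Open Scope ring_scope.

Lemma mcoeff_extract n (p : {mpoly algC[n]}) k :
  p@_k = \sum_(m <- msupp p) p@_m * (m == k)%:R.
Proof.
rewrite {1}(mpolyE p) raddf_sum /=.
by apply: eq_bigr => m _; rewrite mcoeffZ mcoeffX.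
Qed.

Lemma meval_muni n (p : {mpoly algC[n.+1]}) (z : 'I_n.+1 -> algC) :
  p.@[z] = (map_poly (meval (fun i : 'I_n => z (widen_ord (leqnSn n) i))) (muni p)).[z ord_max].
Proof.
rewrite muniE mevalE rmorph_sum horner_sum; apply: eq_bigr => m _.
rewrite /= map_polyZ map_polyXn hornerZ hornerXn.
have fE : forall q, (mpoly_meval__canonical__GRing_RMorphism (fun i : 'I_n => z (widen_ord (leqnSn n) i))) q = meval (fun i : 'I_n => z (widen_ord (leqnSn n) i)) q by [].
rewrite fE.
rewrite mevalZ mevalX.
rewrite big_ord_recr /= mulrA; congr (_ * _ * _); apply: eq_bigr => i _.
by rewrite mnmE.
Qed.

Lemma muni_coef n (p : {mpoly algC[n.+1]}) (m : 'X_{1..n.+1}) :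
  ((muni p)`_(m ord_max))@_[multinom [tuple m (widen_ord (leqnSn n) i) | i < n]] = p@_m.
Proof.
rewrite muniE (mcoeff_extract p m).
rewrite coef_sum raddf_sum /=; apply: eq_bigr => m2 _.
rewrite coefZ coefXn mulr_natr mcoeffMn mcoeffZ mcoeffX.
have -> : (m2 == m) = ([multinom [tuple m2 (widen_ord (leqnSn n) i) | i < n]] ==
   [multinom [tuple m (widen_ord (leqnSn n) i) | i < n]]) && (m2 ord_max == m ord_max).
  apply/eqP/andP => [->|[/eqP e1 /eqP e2]]; first by [].
  apply/mnmP => i; case: (unliftP ord_max i) => [j ->|->] //.
  have := congr1 (fun mm : 'X_{1..n} => mm j) e1; rewrite !mnmE.
  by have -> : lift ord_max j = widen_ord (leqnSn n) j by apply/val_inj; rewrite /= /bump leqNgt ltn_ord.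
rewrite [m ord_max == _]eq_sym.
by case: eqP; case: eqP; rewrite /= ?mulr0 ?mulr1 ?mul0r ?mulr0n ?mulr1n.
Qed.

Lemma mpoly_eval_eq0 n (p : {mpoly algC[n]}) : (forall z, p.@[z] = 0) -> p = 0.
Proof.
elim: n p => [|n IH] p H.
  apply/mpolyP => k; rewrite mcoeff0 (mcoeff_extract p k).
  transitivity (p.@[fun _ => 0]); last exact: H.
  rewrite mevalE.
  apply: eq_bigr => m _; rewrite big_ord0.
  by have -> : m == k by apply/eqP/mnmP => -[].
suff Hu : muni p = 0.
  apply/mpolyP => m; rewrite mcoeff0 -muni_coef Hu coef0 mcoeff0 //.
apply/polyP => k; rewrite coef0.
apply: IH => v.
pose zt (t : algC) : 'I_n.+1 -> algC := fun i => if unlift ord_max i is Some j then v j else t.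
have zv : forall t (i : 'I_n), zt t (widen_ord (leqnSn n) i) = v i.
  move=> t i; rewrite /zt.
  have -> : widen_ord (leqnSn n) i = lift ord_max i.
    by apply/val_inj; rewrite /= /bump leqNgt ltn_ord.
  by rewrite liftK.
pose Q := map_poly (meval v) (muni p).
have HQ : forall t, Q.[t] = 0.
  move=> t; rewrite /Q -(H (zt t)).
  rewrite meval_muni; congr (horner _ _); last by rewrite /zt unlift_none.
  by apply: eq_map_poly => q; apply: meval_eq => i; rewrite zv.
have Q0 : Q = 0.
  apply/eqP/negPn/negP => nzQ.
  pose rs := [seq i%:R | i <- iota 0 (size Q)] : seq algC.
  have h1 : all (root Q) rs by apply/allP => x _; rewrite /root HQ.
  have h2 : uniq rs.
    by rewrite map_inj_uniq ?iota_uniq // => a b /eqP; rewrite eqr_nat => /eqP.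
  by have := max_poly_roots nzQ h1 h2; rewrite size_map size_iota ltnn.
have := congr1 (fun q : {poly algC} => q`_k) Q0.
by rewrite /= coef0 /Q coef_map.
Qed.

Lemma conj_det_eq k1 k2 n (K1 : 'M[algC]_(k1, n)) (K2 : 'M_(k2, n)) (v : 'M_n) :
  row_free K1 -> row_free K2 -> (K1 :=: K2)%MS -> stablemx K2 v ->
  \det (conjmx K1 v) = \det (conjmx K2 v).
Proof.
move=> rf1 rf2 e12 st2.
have ek : k1 = k2.
  by move: rf1 rf2; rewrite /row_free e12 => /eqP <- /eqP.
subst k2.
have s12 : (K1 <= K2)%MS by rewrite e12.
have s21 : (K2 <= K1)%MS by rewrite e12.
have st1 : stablemx K1 v.
  exact: submx_trans (submxMr _ s12) (submx_trans st2 s21).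
pose C := K1 *m pinvmx K2; pose C' := K2 *m pinvmx K1.
have hK1 : C *m K2 = K1 by rewrite /C mulmxKpV.
have hK2 : C' *m K1 = K2 by rewrite /C' mulmxKpV.
have CC : C *m C' = 1%:M.
  by apply: (row_free_inj rf1); rewrite /= -mulmxA hK2 hK1 mul1mx.
have cj : conjmx K1 v = C *m conjmx K2 v *m C'.
  apply: (row_free_inj rf1); rewrite /=.
  have e1 : conjmx K1 v *m K1 = K1 *m v by rewrite /conjmx mulmxKpV.
  have e2 : conjmx K2 v *m K2 = K2 *m v by rewrite /conjmx mulmxKpV.
  by rewrite e1 -(mulmxA _ C') hK2 -(mulmxA C) e2 mulmxA hK1.
rewrite cj !det_mulmx mulrC mulrA -det_mulmx.
have -> : C' *m C = 1%:M.
  apply: (row_free_inj rf2); rewrite /= -mulmxA hK1 hK2 mul1mx //.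
by rewrite det1 mul1r.
Qed.

Lemma det_adds n (F M v : 'M[algC]_n) :
  mxdirect (F + M) -> (F + M :=: 1%:M)%MS -> stablemx F v -> stablemx M v ->
  \det v = \det (conjmx (row_base F) v) * \det (conjmx (row_base M) v).
Proof.
move=> dFM eFM sF sM.
pose K := col_mx (row_base F) (row_base M).
have eK : (K :=: F + M)%MS.
  exact: eqmx_trans (eqmx_sym (addsmxE _ _)) (adds_eqmx (eq_row_base F) (eq_row_base M)).
have rfK : row_free K.
  by rewrite /row_free eK; move: dFM; rewrite mxdirectE.
have rf1 : row_free (1%:M : 'M[algC]_n) by rewrite row_free_unit unitmx1.
have := conj_det_eq rfK rf1 (eqmx_trans eK eFM) (submx1 _).
move=> /(_ v); rewrite conj1mx => <-.
have sF' : stablemx (row_base F) v by rewrite stablemx_row_base.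
have sM' : stablemx (row_base M) v by rewrite stablemx_row_base.
have -> : conjmx K v = block_mx (conjmx (row_base F) v) 0 0 (conjmx (row_base M) v).
  apply: (row_free_inj rfK); rewrite /= mul_block_col !mul0mx addr0 add0r.
  have sK : (K *m v <= K)%MS.
    by rewrite /K mul_col_mx -!addsmxE addsmxS.
  rewrite /conjmx !mulmxKpV //.
  by rewrite /K mul_col_mx.
by rewrite det_ublock.
Qed.

Section FM.
Variables (n : nat) (u : 'M[algC]_n) (L : nat).
Hypotheses (L0 : (0 < L)%N) (uL : u ^+ L = 1).

Let P := \sum_(j < L) u ^+ j.

Lemma Pu : P *m u = P.
Proof.
rewrite /P mulmx_suml; case: L L0 uL => // L' _ uL'.
rewrite big_ord_recr big_ord_recl /= mulmxE -exprSr uL' addrC expr0; congr (_ + _).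
by apply: eq_bigr => i _; rewrite -exprSr.
Qed.

Lemma eigen_P l : l != 1 -> (eigenspace u l *m P = 0).
Proof.
move=> l1; set E := eigenspace u l.
have Eu : forall j, E *m u ^+ j = l ^+ j *: E.
  elim=> [|j IH]; first by rewrite expr0 mulmx1 scale1r.
  rewrite exprSr mulmxE mulrA -mulmxE IH -scalemxAl.
  by have /eigenspaceP -> := submx_refl E; rewrite scalerA -exprSr.
have EP : E *m P = (\sum_(j < L) l ^+ j) *: E.
  by rewrite /P mulmx_sumr scaler_suml; apply: eq_bigr => j _; rewrite Eu.
have : E *m P = l *: (E *m P).
  have Eu1 : E *m u = l *: E by rewrite -(expr1 u) Eu expr1.
  by rewrite -{1}Pu mulmxA EP -scalemxAl Eu1 scalerA mulrC -scalerA -EP.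
move/eqP; rewrite -subr_eq0 -{1}(scale1r (E *m P)) -scalerBl scaler_eq0 subr_eq0.
by rewrite eq_sym (negbTE l1) /= => /eqP.
Qed.

Lemma M_ker : (Mspace u <= kermx P)%MS.
Proof.
rewrite /Mspace; elim/big_ind: _ => //; first exact: sub0mx.
  by move=> A B HA HB; rewrite addsmx_sub HA HB.
by move=> l l1; apply/sub_kermxP; rewrite eigen_P.
Qed.

Lemma fixM_direct : (Fix u :&: Mspace u = 0)%MS.
Proof.
set X := (Fix u :&: Mspace u)%MS.
have XF : (X <= Fix u)%MS by rewrite capmxSl.
have XM : (X <= kermx P)%MS by rewrite (submx_trans (capmxSr _ _)) ?M_ker.
move/sub_kermxP: XM; move/eigenspaceP: XF; rewrite scale1r => Xu.
have Xuj : forall j, X *m u ^+ j = X.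
  by elim=> [|j IH]; rewrite ?expr0 ?mulmx1 // exprSr mulmxE mulrA -mulmxE IH.
rewrite /P mulmx_sumr (eq_bigr (fun _ => X)) ?sumr_const ?card_ord; last by move=> j _; rewrite Xuj.
by move/eqP; rewrite -scaler_nat scaler_eq0 pnatr_eq0 eqn0Ngt L0 /= => /eqP.
Qed.

Lemma eig_sub_M l : l != 1 -> eigenspace u l != 0 -> (eigenspace u l <= Mspace u)%MS.
Proof.
move=> l1 nz.
have hr : root (char_poly u) l by rewrite -eigenvalue_root_char.
have hl : l \in eigs u.
  rewrite /eigs mem_undup.
  case: (closed_field_poly_normal (char_poly u)) => rs /= hrs.
  move: hr; rewrite hrs (eqP (char_poly_monic u)) scale1r root_prod_XsubC //.
rewrite /Mspace (big_rem l hl) /= l1; exact: addsmxSl.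
Qed.

End FM.

Lemma fixM_full n (u : 'M[algC]_n) L : (0 < L)%N -> u ^+ L = 1 ->
  (Fix u + Mspace u :=: 1%:M)%MS.
Proof.
move=> L0 uL; apply/eqmxP; rewrite submx1 /=.
case: n u uL => [|n'] u' uL'.
  by rewrite thinmx0 sub0mx.
have [z zp] := C_prim_root_exists L0.
have dz : diagonalizable u'.
  apply/diagonalizableP; exists [seq z ^+ i | i <- iota 0 L].
    rewrite map_inj_in_uniq ?iota_uniq // => a b; rewrite !mem_iota /= !add0n => ha hb.
    by move/eqP; rewrite (eq_prim_root_expr zp) !modn_small // => /eqP.
  rewrite big_map -(subn0 L) -/(index_iota 0 L) (factor_Xn_sub_1 zp).
  apply: mxminpoly_min; rewrite rmorphB rmorphXn /= horner_mx_X uL' rmorph1 subrr //.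
have [rs _ hrs] := iffLR (@diagonalizablePeigen _ _ u') dz.
rewrite -hrs; elim/big_ind: _ => //; first exact: sub0mx.
  by move=> A B HA HB; rewrite addsmx_sub HA HB.
move=> l _; case: (eqVneq l 1) => [->|l1]; first exact: addsmxSl.
case: (eqVneq (eigenspace u' l) 0) => [->|nz]; first exact: sub0mx.
apply: submx_trans (addsmxSr _ _); exact: eig_sub_M.
Qed.


Section Perm.
Variables (N : nat) (s : {perm 'I_N}) (d : 'I_N).
Local Notation u := (perm_mx s : 'M[algC]_N).

Lemma porbit_inv j : porbit s (s^-1%g j) = porbit s j.
Proof.
by rewrite -!(porbitV s); have := porbit_perm s^-1 1 j; rewrite expg1.
Qed.

Lemma porbit_fwd j : porbit s (s j) = porbit s j.
Proof. by have := porbit_perm s 1 j; rewrite expg1. Qed.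

Lemma perm_entry m (x : 'M[algC]_(m, N)) i j : (x *m u) i j = x i (s^-1%g j).
Proof. by rewrite -[in perm_mx s](invgK s) -col_permE mxE. Qed.

Lemma perm_entryl m (x : 'M[algC]_(N, m)) i j : (u *m x) i j = x (s i) j.
Proof. by rewrite -row_permE mxE. Qed.

Lemma in_orbit_inv C j : C \in porbits s -> (s^-1%g j \in C) = (j \in C).
Proof. by case/imsetP => x _ ->; rewrite -!eq_porbit_mem porbit_inv. Qed.

Lemma orbit_eq C j : C \in porbits s -> j \in C -> porbit s j = C.
Proof. by case/imsetP => x _ -> h; apply/eqP; rewrite eq_porbit_mem. Qed.

Lemma porbit_in j : porbit s j \in porbits s.
Proof. exact: imset_f. Qed.

Definition rep (C : {set 'I_N}) := odflt d [pick x in C].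

Lemma repP C : C \in porbits s -> rep C \in C.
Proof.
case/imsetP => x _ ->; rewrite /rep; case: pickP => [y //|/(_ x)].
by rewrite porbit_id.
Qed.

Definition KF : 'M[algC]_(#|porbits s|, N) :=
  \matrix_(k, j) ((j \in (enum_val k : {set 'I_N})) %:R).

Lemma KFE k j : KF k j = (j \in (enum_val k : {set 'I_N}))%:R.
Proof. by rewrite mxE. Qed.

Lemma KF_free : row_free KF.
Proof.
apply: inj_row_free => y hy; apply/rowP => k.
have Ck := enum_valP k.
have := congr1 (fun z : 'rV_N => z 0 (rep (enum_val k))) hy.
rewrite /= !mxE => <-.
rewrite (bigD1 k) //= big1 ?addr0; first by rewrite KFE repP // mulr1.
move=> k' nk.
rewrite KFE mulr_natr mulrb; case: ifP => h //.
case/eqP: nk; apply: enum_val_inj.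
by rewrite -(orbit_eq (enum_valP k') h) (orbit_eq Ck (repP Ck)).
Qed.

Lemma fix_const (y : 'rV[algC]_N) : y *m u = y -> forall a b, b \in porbit s a -> y 0 b = y 0 a.
Proof.
move=> hy a b; rewrite -porbitV => /porbitP [k ->].
elim: k => [|k IH]; first by rewrite expg0 perm1.
by rewrite expgSr permM -perm_entry hy IH.
Qed.

Lemma KF_fix : (KF :=: Fix u)%MS.
Proof.
apply/eqmxP/andP; split.
  apply/eigenspaceP; rewrite scale1r; apply/matrixP => k j.
  by rewrite perm_entry !KFE in_orbit_inv // enum_valP.
apply/row_subP => i.
have /eigenspaceP := row_sub i (Fix u); rewrite scale1r.
move: (row i (Fix u)) => y hy.
have -> : y = (\row_k y 0 (rep (enum_val k))) *m KF.
  apply/rowP => j; rewrite mxE.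
  have Cj := porbit_in j.
  rewrite (bigD1 (enum_rank_in Cj (porbit s j))) //= big1 ?addr0.
    rewrite mxE KFE enum_rankK_in // porbit_id mulr1.
    apply: (fix_const hy); rewrite porbit_sym.
    by have := repP Cj.
  move=> k nk; rewrite mxE KFE mulr_natr mulrb; case: ifP => h //.
  case/eqP: nk; apply: enum_val_inj; rewrite enum_rankK_in //.
  by rewrite (orbit_eq (enum_valP k) h).
exact: submxMl.
Qed.

Section Diag.
Variable c : {set 'I_N} -> algC.
Let D := diag_mx (\row_j c (porbit s j)).

Lemma diag_comm : D *m u = u *m D.
Proof.
apply/matrixP => i j; rewrite perm_entry perm_entryl !mxE.
rewrite porbit_fwd; congr (_ *+ _).
by rewrite -(inj_eq (@perm_inj _ s)) permKV.
Qed.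

Lemma KF_diag : KF *m D = diag_mx (\row_k c (enum_val k)) *m KF.
Proof.
rewrite mul_mx_diag mul_diag_mx; apply/matrixP => k j; rewrite !mxE ?KFE.
rewrite mulr_natr mulr_natl !mulrb; case: ifP => h //.
by rewrite (orbit_eq (enum_valP k) h).
Qed.

Lemma det_restr_fix : det_restr D (Fix u) = \prod_(C in porbits s) c C.
Proof.
have stF : stablemx KF D by rewrite KF_diag submxMl.
have e : (row_base (Fix u) :=: KF)%MS.
  exact: eqmx_trans (eq_row_base _) (eqmx_sym KF_fix).
rewrite /det_restr -/(conjmx _ _) (conj_det_eq (row_base_free _) KF_free e stF).
have -> : conjmx KF D = diag_mx (\row_k c (enum_val k)).
  apply: (row_free_inj KF_free); rewrite /= /conjmx mulmxKpV //.
  exact: KF_diag.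
rewrite det_diag [RHS]big_enum_val; apply: eq_bigr => k _; by rewrite mxE.
Qed.
End Diag.
End Perm.

Lemma mpolyX_sum n (I : Type) (rr : seq I) (P : pred I) (F : I -> 'X_{1..n}) :
  ('X_[(\sum_(i <- rr | P i) F i)%MM] : {mpoly algC[n]}) = \prod_(i <- rr | P i) 'X_[F i].
Proof. exact: (big_morph _ (mpolyXD _) (mpolyX0 _ _)). Qed.

Lemma comp_pk n k (lq : n.-tuple {mpoly algC[k]}) (p : {mpoly algC[n]}) :
  mpoly_comp_mpoly__canonical__GRing_RMorphism lq p = comp_mpoly lq p.
Proof. by []. Qed.

Lemma mc_pk n (m : 'X_{1..n}) (p : {mpoly algC[n]}) :
  mpoly_mcoeff__canonical__Algebra_Additive algC m p = p@_m.
Proof. by []. Qed.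

Section Poly.
Variables (N : nat) (s : {perm 'I_N}) (d : 'I_N) (r : {set 'I_N} -> nat).
Local Notation u := (perm_mx s : 'M[algC]_N).
Local Notation rep := (rep d).

Local Notation rho p := (p \mPo [tuple ('X_(rep (porbit s j)) : {mpoly algC[N]}) | j < N]).

Definition mu : 'X_{1..N} := (\sum_(C in porbits s) U_(rep C) *+ r C)%MM.

Lemma rhoXU j : rho 'X_j = 'X_(rep (porbit s j)).
Proof. by rewrite comp_mpolyXU -tnth_nth tnth_mktuple. Qed.

Lemma rep_inj C C' : C \in porbits s -> C' \in porbits s -> rep C = rep C' -> C = C'.
Proof.
move=> hC hC' e.
by rewrite -(orbit_eq hC (repP d hC)) -(orbit_eq hC' (repP d hC')) e.
Qed.

Lemma mu_rep C : C \in porbits s -> mu (rep C) = r C.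
Proof.
move=> hC; rewrite /mu mnm_sumE (bigD1 C) //= big1 ?addn0.
  by rewrite mulmnE mnm1E eqxx mul1n.
move=> C' /andP [hC' nC]; rewrite mulmnE mnm1E.
case: eqP => // e; case/eqP: nC; exact: rep_inj.
Qed.

Lemma rhoX : rho (Xpoly s r) =
  (\prod_(C in porbits s) (#|C|%:R) ^+ r C) *: 'X_[mu].
Proof.
rewrite /Xpoly rmorph_prod /mu mpolyX_sum -scaler_prod.
apply: eq_bigr => C hC; rewrite rmorphXn rmorph_sum /=.
rewrite (eq_bigr (fun _ => 'X_(rep C))); last first.
  by move=> k hk; rewrite rhoXU (orbit_eq hC hk).
by rewrite sumr_const -scaler_nat exprZn mpolyXn.
Qed.

Lemma rho_big (g : {mpoly algC[N]}) (m : 'X_{1..N}) i :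
  (forall C, C \in porbits s -> (r C < N.-1)%N) ->
  (N.-1 <= m i)%N -> (g * rho 'X_[m])@_mu = 0.
Proof.
move=> hr hm.
have -> : rho 'X_[m] = 'X_[(\sum_(k < N) U_(rep (porbit s k)) *+ m k)%MM].
  rewrite comp_mpolyX mpolyX_sum; apply: eq_bigr => k _.
  by rewrite tnth_mktuple mpolyXn.
set m' := (\sum_(k < N) _)%MM.
have hm' : (N.-1 <= m' (rep (porbit s i)))%N.
  rewrite /m' mnm_sumE (bigD1 i) //= mulmnE mnm1E eqxx mul1n.
  exact: leq_trans hm (leq_addr _ _).
rewrite mcoeffM big1 // => k /eqP hk.
rewrite mcoeffX; case: eqP => [ek|]; last by rewrite mulr0.
have e1 := congr1 (fun mm : 'X_{1..N} => mm (rep (porbit s i))) hk.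
move: e1; rewrite /= mnmDE -ek mu_rep ?porbit_in // => e.
have := hr _ (porbit_in s i); rewrite e => h.
have := leq_trans hm' (leq_addl (k.1 (rep (porbit s i))) _).
by rewrite leqNgt h.
Qed.

Lemma mderiv_fermat i : mderiv i (fermat N) =
  \sum_(j < N) ((U_(j) *+ N)%MM i)%:R *: 'X_[(U_(j) *+ N - U_(i))%MM].
Proof.
rewrite /fermat raddf_sum; apply: eq_bigr => j _.
rewrite mpolyXn; exact: mderivX.
Qed.

Lemma rho_dderiv (g : {mpoly algC[N]}) (w : 'rV[algC]_N) :
  (forall C, C \in porbits s -> (r C < N.-1)%N) ->
  (g * rho (dderiv w (fermat N)))@_mu = 0.
Proof.
move=> hr; rewrite /dderiv rmorph_sum mulr_sumr raddf_sum big1 // => i _.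
rewrite comp_pk comp_mpolyZ mderiv_fermat rmorph_sum /=.
rewrite -scalerAr mcoeffZ mulr_sumr raddf_sum big1 ?mulr0 // => j _.
rewrite comp_mpolyZ -scalerAr mc_pk mcoeffZ mulmnE mnm1E.
case: (eqVneq j i) => [->|nji]; last by rewrite mul0n mul0r.
rewrite (rho_big _ (i := i)) ?mulr0 // mnmBE mulmnE !mnm1E eqxx mul1n.
by rewrite subn1.
Qed.

Lemma rho_vanish (q : {mpoly algC[N]}) :
  (forall x : 'rV[algC]_N, (x <= Fix u)%MS -> q.@[x 0] = 0) -> rho q = 0.
Proof.
move=> hq; apply: mpoly_eval_eq0 => z.
rewrite comp_mpoly_meval.
pose x : 'rV[algC]_N := \row_j z (rep (porbit s j)).
have hx : (x <= Fix u)%MS.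
  apply/eigenspaceP; rewrite scale1r; apply/rowP => j.
  by rewrite perm_entry !mxE porbit_inv.
rewrite -(hq x hx); apply: meval_eq => j.
by rewrite tnth_mktuple mevalXU mxE.
Qed.

Lemma notin_jac (kappa : algC) :
  (forall C, C \in porbits s -> (r C < N.-1)%N) ->
  in_jac_kernel u (kappa *: Xpoly s r) -> kappa = 0.
Proof.
move=> hr [q [ws [hq _ heq]]].
have := congr1 (fun p => (rho p)@_mu) heq.
rewrite /= comp_mpolyZ rhoX !mcoeffZ mcoeffX eqxx mulr1.
rewrite comp_mpolyD rho_vanish // add0r rmorph_sum /= raddf_sum [X in _ = X]big1; last first.
  by move=> wh _; rewrite mc_pk rmorphM rho_dderiv.
move/eqP; rewrite mulf_eq0 => /orP [/eqP //|].
move=> hp; exfalso; move: hp; apply/negP.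
apply/prodf_neq0 => C hC; rewrite expf_neq0 // pnatr_eq0.
by case/imsetP: hC => x _ ->; rewrite card_porbit_neq0.
Qed.
End Poly.

Lemma pullback_diag N (s : {perm 'I_N}) (c : {set 'I_N} -> algC) (r : {set 'I_N} -> nat) :
  pullback (diag_mx (\row_j c (porbit s j))) (Xpoly s r) =
  (\prod_(C in porbits s) c C ^+ r C) *: Xpoly s r.
Proof.
rewrite /pullback /Xpoly rmorph_prod -scaler_prod; apply: eq_bigr => C hC.
rewrite rmorphXn rmorph_sum /= -exprZn scaler_sumr; congr (_ ^+ _).
apply: eq_bigr => k hk.
rewrite comp_pk comp_mpolyXU -tnth_nth tnth_mktuple.
rewrite (bigD1 k) //= big1 ?addr0.
  by rewrite !mxE eqxx mulr1n (orbit_eq hC hk).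
by move=> i /negbTE ni; rewrite !mxE ni mulr0n scale0r.
Qed.

Section Arith.
Local Open Scope nat_scope.
Lemma ndvd_card N a ra kA : (1 < N)%N -> (ra <= N - 2)%N -> (ra + 1 = kA * a %[mod N])%N -> ~~ (N %| a)%N.
Proof.
move=> N1 hr e; apply/negP => /dvdnP [c ac].
move: e; rewrite ac mulnA modnMl modn_small; last by lia.
by rewrite addn1.
Qed.

Lemma arith_same N a ra kA kB : prime N -> (ra <= N - 2)%N -> (0 < kA < N)%N -> (0 < kB < N)%N ->
  (ra + 1 = kA * a %[mod N])%N -> (ra + 1 = kB * a %[mod N])%N -> kA = kB.
Proof.
move=> pN hr /andP[_ hA] /andP[_ hB] eA eB.
have N1 := prime_gt1 pN.
have na := ndvd_card N1 hr eA.
wlog le : kA kB hA hB eA eB / (kA <= kB)%N.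
  move=> H; case: (leqP kA kB) => h; first exact: H.
  by apply/esym/H => //; apply: ltnW.
have : (N %| (kB - kA) * a)%N.
  have lm : (kA * a <= kB * a)%N by rewrite leq_mul2r le orbT.
  by rewrite mulnBl -(eqn_mod_dvd _ lm) -eA -eB.
rewrite Euclid_dvdM // (negbTE na) orbF => hd.
case: (ltnP kA kB) => h; last by lia.
have := dvdn_leq _ hd; rewrite subn_gt0 => /(_ h); lia.
Qed.

Lemma arith N a b ra rb kA kB : prime N -> (ra <= N - 2)%N -> (rb <= N - 2)%N ->
  (0 < kA < N)%N -> (0 < kB < N)%N ->
  (ra + 1 = kA * a %[mod N])%N -> (rb + 1 = kB * b %[mod N])%N ->
  (N %| b * (ra + 1) + (N - 1) * a * (rb + 1))%N -> kA = kB.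
Proof.
move=> pN hra hrb /andP[_ hA] /andP[_ hB] eA eB hd.
have N1 := prime_gt1 pN.
have na := ndvd_card N1 hra eA.
have nb := ndvd_card N1 hrb eB.
have : (N %| a * b * (kA + (N - 1) * kB))%N.
  move: hd; rewrite /dvdn -modnDm -modnMmr eA -[((N - 1) * a * _) %% N]modnMmr eB.
  rewrite modnMmr [X in (_ + X) %% _]modnMmr modnDm.
  have -> : (b * (kA * a) + (N - 1) * a * (kB * b) = a * b * (kA + (N - 1) * kB))%N.
    by nia.
  by [].
rewrite !Euclid_dvdM // (negbTE na) (negbTE nb) /= => hX.
have : (kA = kB %[mod N])%N.
  rewrite -(modnMDl kB kA) (_ : kB * N + kA = (kA + (N - 1) * kB) + kB)%N; last first.
    by rewrite -addnA mulnBl mul1n subnK ?leq_pmull ?prime_gt0 // addnC mulnC.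
  by rewrite -modnDm (eqP hX) add0n modn_mod.
by rewrite !modn_small.
Qed.

End Arith.

Lemma zeta_prim N : (0 < N)%N -> N.-primitive_root (zeta N).
Proof. by case: N => // n _; rewrite /zeta; exact: (svalP (C_prim_root_exists _)). Qed.

Lemma sum_orbit_ind N (s : {perm 'I_N}) C x : C \in porbits s ->
  (\sum_(j < N) ((porbit s j == C) * x) = #|C| * x)%N.
Proof.
case/imsetP => a _ ->; rewrite -sum_nat_const [RHS]big_mkcond /=; apply: eq_bigr => j _.
by rewrite eq_porbit_mem; case: ifP => _; rewrite ?mul1n ?mul0n.
Qed.

Lemma perm_mx_exp N (s : {perm 'I_N}) k : (perm_mx (s ^+ k)%g : 'M[algC]_N) = perm_mx s ^+ k.
Proof.
elim: k => [|k IH]; first by rewrite expg0 perm_mx1 expr0.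
by rewrite expgS perm_mxM IH exprS mulmxE.
Qed.

Theorem proposition10 (N : nat) (HN : prime N) (S : {group {perm 'I_N}})
  (sigma : {perm 'I_N}) (Hsigma : sigma \in S) (r : {set 'I_N} -> nat)
  (Hr : forall A, A \in porbits sigma -> (r A <= N - 2)%N)
  (Hinv : forall v : 'M[algC]_N,
      in_centralizer S (perm_mx sigma) v ->
      invariant_by (perm_mx sigma) v (Xpoly sigma r)) :
  forall A B : {set 'I_N}, A \in porbits sigma -> B \in porbits sigma ->
  forall kA kB : nat, (0 < kA < N)%N -> (0 < kB < N)%N ->
    (r A + 1 = kA * #|A| %[mod N])%N ->
    (r B + 1 = kB * #|B| %[mod N])%N ->
    kA = kB.
Proof.
move=> A B hA hB kA kB hkA hkB eA eB.
have N1 := prime_gt1 HN.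
have N0 : (0 < N)%N := ltnW N1.
have hrA := Hr A hA; have hrB := Hr B hB.
case: (eqVneq A B) => [eAB|nAB].
  by subst B; exact: arith_same HN hrA hkA hkB eA eB.
have [a _ Aa] := imsetP hA.
pose eo (C : {set 'I_N}) : nat := ((C == A) * #|B| + (C == B) * ((N - 1) * #|A|))%N.
pose c (C : {set 'I_N}) : algC := zeta N ^+ eo C.
pose D : 'M[algC]_N := diag_mx (\row_j c (porbit sigma j)).
have zp := zeta_prim N0.
have hsum : (\sum_(j < N) eo (porbit sigma j) = N * (#|A| * #|B|))%N.
  rewrite big_split /= !sum_orbit_ind //.
  have -> : (#|B| * ((N - 1) * #|A|) = (N - 1) * (#|A| * #|B|))%N.
    by rewrite mulnCA (mulnC #|B|).
  by rewrite -{1}(mul1n (#|A| * #|B|)%N) -mulnDl subnKC.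
have detD : \det D = 1.
  rewrite det_diag (eq_bigr (fun j => zeta N ^+ eo (porbit sigma j))); last by move=> j _; rewrite mxE.
  by rewrite prodrXr hsum exprM (prim_expr_order zp) expr1n.
have cen : in_centralizer S (perm_mx sigma) D.
  split; last exact: diag_comm.
  exists 1%g, D; split; [exact: group1 | | by rewrite perm_mx1 mul1mx].
  by split => //; exists (fun j => eo (porbit sigma j)).
have inv := Hinv D cen.
rewrite /invariant_by pullback_diag scalerA -{2}(scale1r (Xpoly sigma r)) -scalerBl in inv.
have hr' : forall C, C \in porbits sigma -> (r C < N.-1)%N.
  by move=> C hC; have := Hr C hC; lia.
have k0 := notin_jac a hr' inv.
set lam := \prod_(C in porbits sigma) c C ^+ r C in k0.
set del := det_restr D (Mspace (perm_mx sigma)) in k0.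
have dl : del^-1 * lam = 1 by apply/eqP; rewrite -subr_eq0 k0.
have del0 : del != 0.
  by apply/eqP => e; move: dl; rewrite e invr0 mul0r => /eqP; rewrite eq_sym oner_eq0.
have lamdel : lam = del by rewrite -[lam](mulVKf del0) dl mulr1.
have uL : (perm_mx sigma : 'M[algC]_N) ^+ #[sigma]%g = 1.
  by rewrite -perm_mx_exp expg_order perm_mx1.
have commD : comm_mx (perm_mx sigma) D by rewrite /comm_mx diag_comm.
have stF : stablemx (Fix (perm_mx sigma)) D by exact: comm_mx_stable_eigenspace.
have stM : stablemx (Mspace (perm_mx sigma)) D.
  rewrite /Mspace; elim/big_ind: _.
  - by rewrite mul0mx sub0mx.
  - by move=> W1 W2 h1 h2; rewrite addsmxMr addsmxS.
  - by move=> l _; exact: comm_mx_stable_eigenspace.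
have dec := det_adds (introT mxdirect_addsP (fixM_direct (order_gt0 sigma) uL))
  (fixM_full (order_gt0 sigma) uL) stF stM.
rewrite detD -/(det_restr D (Fix (perm_mx sigma))) -/(det_restr D (Mspace (perm_mx sigma))) in dec.
rewrite (det_restr_fix sigma a) -/del -lamdel -big_split /= in dec.
rewrite (eq_bigr (fun C => zeta N ^+ (eo C * (r C).+1))) in dec; last first.
  by move=> C _; rewrite /c -exprS -exprM.
rewrite prodrXr in dec.
have hT : (N %| #|B| * (r A + 1) + (N - 1) * #|A| * (r B + 1))%N.
  rewrite (prim_order_dvd zp) [X in _ == X]dec; apply/eqP; congr (_ ^+ _).
  rewrite (bigD1 A) //= (bigD1 B) /=; last by rewrite hB eq_sym nAB.
  rewrite big1 ?addn0.
    by rewrite /eo eqxx (negbTE nAB) eq_sym (negbTE nAB) eqxx !mul1n !mul0n !addn0 add0n !addn1.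
  by move=> C /andP [/andP [_ nA] nB]; rewrite /eo (negbTE nA) (negbTE nB).
exact: arith HN hrA hrB hkA hkB eA eB hT.
Qed.
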